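(* Let $t,b,k$ be positive integers with $4\le k\le t$ and $\ell=bk/(t(t-1))$ an integer, and let $d^*$ be a circular design neighbor-balanced at distances 1 and 2 in $\Omega_{(t,b,k)}$. Then under model $(\mathcal{M}2)$ the information matrix for the total effects $\psi=\tau+\lambda+\rho$ is $$C_{d^*}[\psi]=\frac{b(k-3)}{3(t-1)}\,Q_t,\qquad Q_t=I_t-t^{-1}J_t.$$
   Context: Designs: $t$ treatments, $b$ linear blocks; block $i$ has inner plots $j=1,\dots,k$ and border plots $j=0,k+1$; $d(i,j)$ is the treatment on plot $(i,j)$; circular means $d(i,0)=d(i,k)$, $d(i,k+1)=d(i,1)$. $\Omega_{(t,b,k)}$ is the set of circular designs with $t$ treatments and $b$ blocks of length $k$. $J_t$ is the $t\times t$ all-ones matrix. Model $(\mathcal{M}2)$: responses $Y_{i,j}$ ($1\le i\le b$, $1\le j\le k$) uncorrelated with common variance, $\mathbb{E}(Y_{i,j})=\beta_i+\tau_{d(i,j)}+\lambda_{d(i,j-1)}+\rho_{d(i,j+1)}$, i.e. $\mathbb{E}(Y)=B\beta+T_d\tau+L_d\lambda+R_d\rho$ with $B$ block incidence and $T_d,L_d,R_d$ ($bk\times t$) having a single $1$ in row $(i,j)$ at column $d(i,j)$, $d(i,j-1)$, $d(i,j+1)$ respectively. $\psi=K'\alpha$ with $\alpha=(\tau',\lambda',\rho')'$, $K=\mathbf 1_3\otimes I_t$. Information matrix: with $A=(T_d\mid L_d\mid R_d)$, $X^+$ the Moore–Penrose inverse, $\mathrm{pr}_{(X)}=X(X'X)^+X'$,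 $\mathrm{pr}^\perp_{(X)}=I-\mathrm{pr}_{(X)}$, $M=I-K(K'K)^+K'$, $X_1=AK(K'K)^+$, $X_2=(AM\mid B)$: $C_d[\psi]=X_1'\mathrm{pr}^\perp_{(X_2)}X_1$. CNBD: a design in $\Omega_{(t,b,k)}$ that is binary (each treatment at most once among the inner plots of each block), a balanced block design (equal replication and each unordered pair of distinct treatments together in the same number of blocks), and such that for each ordered pair $(a,c)$ of distinct treatments exactly $\ell$ inner plots $(i,j)$ have $d(i,j)=a$, $d(i,j+1)=c$. A CNBD2 (circular design neighbor-balanced at distances 1 and 2) is a CNBD such that moreover for each ordered pair $(a,c)$ of distinct treatments exactly $\ell$ inner plots $(i,j)$ have $d(i,j-1)=a$ and $d(i,j+1)=c$. *)

(* Defs.v *)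
From HB Require Import structures.
From mathcomp Require Import all_boot all_order all_algebra.
From mathcomp Require Import reals.
From Stdlib Require Import ClassicalEpsilon.
Set Implicit Arguments. Unset Strict Implicit. Unset Printing Implicit Defensive.
Import Order.TTheory GRing.Theory Num.Theory.
Local Open Scope ring_scope.

Section Defs.
Variable R : realType.

Definition is_mpinv m n (A : 'M[R]_(m, n)) (G : 'M[R]_(n, m)) : Prop :=
  [/\ A *m G *m A = A, G *m A *m G = G,
      (A *m G)^T = A *m G & (G *m A)^T = G *m A].

Definition mpinv m n (A : 'M[R]_(m, n)) : 'M[R]_(n, m) :=
  epsilon (inhabits 0) (is_mpinv A).

Definition pr m n (X : 'M[R]_(m, n)) : 'M[R]_m := X *m mpinv (X^T *m X) *m X^T.
Definition prperp m n (X : 'M[R]_(m, n)) : 'M[R]_m := 1%:M - pr X.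

(* A design: d i j = treatment on inner plot (i, j+1), i : block, j : 0-based
   inner position.  Circularity: left/right neighbours are taken cyclically. *)
Definition design (t b k : nat) := 'I_b -> 'I_k -> 'I_t.

Definition nplots (b k : nat) := #|{: 'I_b * 'I_k}|.
Definition plot (b k : nat) (r : 'I_(nplots b k)) : 'I_b * 'I_k := enum_val r.

Definition Tmat t b k (d : design t b k) : 'M[R]_(nplots b k, t) :=
  \matrix_(r, c) ((d (plot r).1 (plot r).2 == c)%:R).
Definition Lmat t b k (d : design t b k) : 'M[R]_(nplots b k, t) :=
  \matrix_(r, c) ((d (plot r).1 (ord_pred (plot r).2) == c)%:R).
Definition Rmat t b k (d : design t b k) : 'M[R]_(nplots b k, t) :=
  \matrix_(r, c) ((d (plot r).1 (ordS (plot r).2) == c)%:R).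
Definition Bmat b k : 'M[R]_(nplots b k, b) :=
  \matrix_(r, i) (((plot r).1 == i)%:R).

Definition Amat t b k (d : design t b k) : 'M[R]_(nplots b k, t + t + t) :=
  row_mx (row_mx (Tmat d) (Lmat d)) (Rmat d).
Definition Kmat t : 'M[R]_(t + t + t, t) := col_mx (col_mx 1%:M 1%:M) 1%:M.
Definition Mmat t : 'M[R]_(t + t + t) :=
  1%:M - Kmat t *m mpinv ((Kmat t)^T *m Kmat t) *m (Kmat t)^T.
Definition X1mat t b k (d : design t b k) : 'M[R]_(nplots b k, t) :=
  Amat d *m Kmat t *m mpinv ((Kmat t)^T *m Kmat t).
Definition X2mat t b k (d : design t b k) : 'M[R]_(nplots b k, (t + t + t) + b) :=
  row_mx (Amat d *m Mmat t) (Bmat b k).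

Definition info_psi t b k (d : design t b k) : 'M[R]_t :=
  (X1mat d)^T *m prperp (X2mat d) *m X1mat d.

End Defs.

Definition binary t b k (d : design t b k) : Prop :=
  forall i, injective (d i).

Definition in_block t b k (d : design t b k) (i : 'I_b) (a : 'I_t) : bool :=
  [exists j, d i j == a].

Definition balanced_block t b k (d : design t b k) : Prop :=
  (exists rep, forall a : 'I_t, #|[set p : 'I_b * 'I_k | d p.1 p.2 == a]| = rep) /\
  (exists lam, forall a c : 'I_t, a != c ->
     #|[set i : 'I_b | in_block d i a && in_block d i c]| = lam).

Definition nb1 t b k (d : design t b k) (l : nat) : Prop :=
  forall a c : 'I_t, a != c ->
    #|[set p : 'I_b * 'I_k | (d p.1 p.2 == a) && (d p.1 (ordS p.2) == c)]| = l.

Definition nb2 t b k (d : design t b k) (l : nat) : Prop :=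
  forall a c : 'I_t, a != c ->
    #|[set p : 'I_b * 'I_k |
        (d p.1 (ord_pred p.2) == a) && (d p.1 (ordS p.2) == c)]| = l.

Definition CNBD t b k (d : design t b k) (l : nat) : Prop :=
  [/\ binary d, balanced_block d & nb1 d l].

Definition CNBD2 t b k (d : design t b k) (l : nat) : Prop :=
  CNBD d l /\ nb2 d l.

(* Main.v *)
Require Import Defs.
From HB Require Import structures.
From mathcomp Require Import all_boot all_order all_algebra.
From mathcomp Require Import reals.
From mathcomp Require Import ring lra zify.
From Stdlib Require Import ClassicalEpsilon.
Set Implicit Arguments. Unset Strict Implicit. Unset Printing Implicit Defensive.
Import Order.TTheory GRing.Theory Num.Theory.
Local Open Scope ring_scope.

Section MP.
Variable R : realType.

Lemma mulmx_tr_eq0 m n (X : 'M[R]_(m, n)) : X *m X^T = 0 -> X = 0.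
Proof.
move=> H; apply/matrixP => i j; rewrite mxE.
have := congr1 (fun M : 'M[R]_m => M i i) H; rewrite !mxE => H2.
have H3 : forall j0 : 'I_n, true -> X i j0 * X^T j0 i = 0.
  apply: psumr_eq0P => // j0 _; rewrite mxE; rewrite -expr2; exact: sqr_ge0.
by have := H3 j isT; rewrite mxE; move/eqP; rewrite mulf_eq0 orbb => /eqP.
Qed.

Lemma full_unit m r (F : 'M[R]_(m, r)) : row_full F -> F^T *m F \in unitmx.
Proof.
move=> hF; rewrite -row_free_unit; apply: inj_row_free => v Hv.
have h1 : (v *m F^T) *m (v *m F^T)^T = 0.
  by rewrite trmx_mul trmxK mulmxA -(mulmxA v) Hv mul0mx.
have h2 := mulmx_tr_eq0 h1.
have hfree : row_free F^T by rewrite /row_free mxrank_tr.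
by apply: (row_free_inj hfree); rewrite h2 mul0mx.
Qed.

Lemma free_unit r n (G : 'M[R]_(r, n)) : row_free G -> G *m G^T \in unitmx.
Proof.
move=> hG; have := @full_unit n r G^T.
by rewrite trmxK; apply; rewrite /row_full mxrank_tr.
Qed.

Lemma mpinv_fact m n r (F : 'M[R]_(m, r)) (Gm : 'M[R]_(r, n)) :
  F^T *m F \in unitmx -> Gm *m Gm^T \in unitmx ->
  is_mpinv (F *m Gm) (Gm^T *m invmx (Gm *m Gm^T) *m invmx (F^T *m F) *m F^T).
Proof.
move=> u1 u2.
set I1 := invmx (F^T *m F); set I2 := invmx (Gm *m Gm^T).
have k1 : I1 *m (F^T *m F) = 1%:M by rewrite mulVmx.
have k2 : (Gm *m Gm^T) *m I2 = 1%:M by rewrite mulmxV.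
have sI1 : I1^T = I1 by rewrite /I1 trmx_inv trmx_mul trmxK.
have sI2 : I2^T = I2 by rewrite /I2 trmx_inv trmx_mul trmxK.
have eAG : (F *m Gm) *m (Gm^T *m I2 *m I1 *m F^T) = F *m I1 *m F^T.
  by rewrite !mulmxA -(mulmxA F Gm) -(mulmxA F) k2 mulmx1.
have eGA : (Gm^T *m I2 *m I1 *m F^T) *m (F *m Gm) = Gm^T *m I2 *m Gm.
  by rewrite !mulmxA -!(mulmxA _ F^T F) -(mulmxA _ I1) k1 mulmx1.
split.
- by rewrite eAG !mulmxA -(mulmxA _ F^T F) -(mulmxA _ I1) k1 mulmx1.
- by rewrite eGA !mulmxA -(mulmxA _ Gm Gm^T) -(mulmxA _ _ I2) k2 mulmx1.
- by rewrite eAG !trmx_mul trmxK sI1 mulmxA.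
- by rewrite eGA !trmx_mul trmxK sI2 mulmxA.
Qed.

Lemma mpinv_exists m n (A : 'M[R]_(m, n)) : exists G, is_mpinv A G.
Proof.
have u1 : (col_base A)^T *m col_base A \in unitmx.
  by apply: full_unit; apply: col_base_full.
have u2 : row_base A *m (row_base A)^T \in unitmx.
  by apply: free_unit; apply: row_base_free.
have := mpinv_fact u1 u2; rewrite mulmx_base => h; by eexists; exact: h.
Qed.

Lemma mpinvP m n (A : 'M[R]_(m, n)) : is_mpinv A (mpinv A).
Proof. rewrite /mpinv; apply: epsilon_spec; exact: mpinv_exists. Qed.

Lemma pr_id m n (X : 'M[R]_(m, n)) : pr X *m X = X.
Proof.
have [h1 _ _ _] := mpinvP (X^T *m X).
set G := mpinv (X^T *m X) in h1 *.
set E := X *m G *m (X^T *m X) - X.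
have hXE : X^T *m E = 0.
  have e : X^T *m (X *m G *m (X^T *m X)) = (X^T *m X) *m G *m (X^T *m X).
    by rewrite !mulmxA.
  by rewrite /E mulmxBr e h1 subrr.
have hEE : E^T *m E = 0.
  have eT : E^T = (X^T *m X)^T *m G^T *m X^T - X^T.
    by rewrite /E linearB /= !trmx_mul mulmxA.
  by rewrite eT mulmxBl -!mulmxA hXE !mulmx0 subrr.
have : E = 0.
  by apply: trmx_inj; rewrite trmx0; apply: mulmx_tr_eq0; rewrite trmxK.
by move/eqP; rewrite subr_eq0 /pr -!mulmxA => /eqP.
Qed.

Lemma pr_orth m n p (X : 'M[R]_(m, n)) (Z : 'M[R]_(m, p)) :
  X^T *m Z = 0 -> pr X *m Z = 0.
Proof. by move=> h; rewrite /pr -mulmxA h mulmx0. Qed.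

End MP.

Section Design.
Variable R : realType.
Variables (t b k : nat).
Local Notation P := ('I_b * 'I_k)%type.
Local Notation n := (nplots b k).

Definition ind m (f : P -> 'I_m) : 'M[R]_(n, m) :=
  \matrix_(r, c) ((f (plot r) == c)%:R).

Definition cnt m m' (f : P -> 'I_m) (g : P -> 'I_m') a c : R :=
  \sum_(p : P) ((f p == a) && (g p == c))%:R.

Lemma indTind m m' (f : P -> 'I_m) (g : P -> 'I_m') a c :
  ((ind f)^T *m ind g) a c = cnt f g a c.
Proof.
rewrite !mxE /cnt [RHS](reindex (@enum_val P predT)); last first.
  by apply: onW_bij; exact: enum_val_bij.
apply: eq_bigr => r _; rewrite !mxE -natrM mulnb /plot.
done.
Qed.

Lemma cnt_sym m m' (f : P -> 'I_m) (g : P -> 'I_m') a c : cnt f g a c = cnt g f c a.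
Proof. by apply: eq_bigr => p _; rewrite andbC. Qed.

Definition sh (p : P) : P := (p.1, ordS p.2).

Lemma sh_inj : injective sh.
Proof. move=> [i j] [i2 j2] /pair_equal_spec /= [-> e]; by rewrite (ordS_inj e). Qed.

Lemma cnt_shift m m' (f f' : P -> 'I_m) (g g' : P -> 'I_m') a c :
  (forall p, f' p = f (sh p)) -> (forall p, g' p = g (sh p)) ->
  cnt f' g' a c = cnt f g a c.
Proof.
move=> hf hg; rewrite /cnt [RHS](reindex_inj sh_inj) /=.
by apply: eq_bigr => p _; rewrite hf hg.
Qed.

Lemma cnt_diag0 m (f g : P -> 'I_m) a : (forall p, f p != g p) -> cnt f g a a = 0.
Proof.
move=> h; apply: big1 => p _; case: eqP => // e; case: eqP => // e'.
by have := h p; rewrite e e' eqxx.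
Qed.

Lemma sum_card (T : finType) (Pr : pred T) :
  \sum_(p : T) (Pr p)%:R = #|[set p | Pr p]|%:R :> R.
Proof.
rewrite -sum1_card natr_sum [RHS]big_mkcond /=; apply: eq_bigr => p _.
by rewrite inE; case: (Pr p).
Qed.

Lemma sum_ind m (x : 'I_m) (B : bool) : \sum_(a : 'I_m) ((x == a) && B)%:R = B%:R :> R.
Proof.
rewrite (bigD1 x) //= eqxx big1 ?addr0 // => a /negbTE; rewrite eq_sym => ->.
by [].
Qed.

Lemma cnt_sum2 m m' (f : P -> 'I_m) (g : P -> 'I_m') a :
  \sum_c cnt f g a c = \sum_p (f p == a)%:R.
Proof.
rewrite /cnt exchange_big /=; apply: eq_bigr => p _.
under eq_bigr do rewrite andbC.
by rewrite sum_ind.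
Qed.

Lemma cnt_sum1 m m' (f : P -> 'I_m) (g : P -> 'I_m') c :
  \sum_a cnt f g a c = \sum_p (g p == c)%:R.
Proof. under eq_bigr do rewrite cnt_sym. by rewrite cnt_sum2. Qed.

Lemma ordS_neq (j : 'I_k) : (1 < k)%N -> ordS j != j.
Proof.
move=> hk; apply/eqP => /(congr1 val) /=.
case: (ltnP j.+1 k) => h.
  by rewrite modn_small // => e; lia.
have e : j.+1 = k by apply/eqP; rewrite eqn_leq h ltn_ord.
by rewrite e modnn => ej; move: e; rewrite -ej => e; rewrite -e in hk.
Qed.

Lemma ordSS_neq (j : 'I_k) : (2 < k)%N -> ordS (ordS j) != j.
Proof.
move=> hk; apply/eqP => /(congr1 val) /=.
case: (ltnP j.+1 k) => h.
  rewrite (modn_small h).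
  case: (ltnP j.+2 k) => h2.
    by rewrite modn_small // => /eqP; rewrite -addn2 -{2}(addn0 j) eqn_add2l.
  have e : j.+2 = k by apply/eqP; rewrite eqn_leq h2 h.
  by rewrite e modnn => ej; rewrite -ej in e; rewrite -e in hk.
have e : j.+1 = k by apply/eqP; rewrite eqn_leq h ltn_ord.
rewrite e modnn modn_small; last by apply: leq_trans hk.
by move=> ej; rewrite -ej in e; rewrite -e in hk.
Qed.

Lemma pred_neq (j : 'I_k) : (2 < k)%N -> ord_pred j != ordS j.
Proof.
move=> hk; apply/eqP => e; have := ordSS_neq (ord_pred j) hk.
by rewrite ord_predK e eqxx.
Qed.


Variable d : design t b k.
Variable l : nat.
Hypothesis hk : (2 < k)%N.
Hypothesis hbin : binary d.
Hypothesis hnb1 : nb1 d l.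
Hypothesis hnb2 : nb2 d l.

Definition fT (p : P) := d p.1 p.2.
Definition fL (p : P) := d p.1 (ord_pred p.2).
Definition fR (p : P) := d p.1 (ordS p.2).
Definition fB (p : P) := p.1.

Definition cross m (x : 'I_m) y : R := (x != y)%:R * l%:R.

Lemma cTR a c : cnt fT fR a c = cross a c.
Proof.
rewrite /cross; case: eqP => [<-|/eqP ne].
  rewrite mul0r; apply: cnt_diag0 => -[i j]; rewrite /fT /fR /=.
  apply/eqP => /hbin e; have := ordS_neq j (ltnW hk); by rewrite -e eqxx.
by rewrite mul1r /cnt sum_card hnb1.
Qed.

Lemma cLR a c : cnt fL fR a c = cross a c.
Proof.
rewrite /cross; case: eqP => [<-|/eqP ne].
  rewrite mul0r; apply: cnt_diag0 => -[i j]; rewrite /fL /fR /=.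
  apply/eqP => /hbin e; have := pred_neq j hk; by rewrite e eqxx.
by rewrite mul1r /cnt sum_card hnb2.
Qed.

Lemma cross_sym m (x y : 'I_m) : cross x y = cross y x.
Proof. by rewrite /cross eq_sym. Qed.

Lemma cRT a c : cnt fR fT a c = cross a c.
Proof. by rewrite cnt_sym cTR cross_sym. Qed.

Lemma cRL a c : cnt fR fL a c = cross a c.
Proof. by rewrite cnt_sym cLR cross_sym. Qed.

Lemma cTL a c : cnt fT fL a c = cross a c.
Proof.
rewrite -cRT; symmetry; apply: cnt_shift => p; by rewrite /fT /fR /fL /sh /= ?ordSK.
Qed.

Lemma cLT a c : cnt fL fT a c = cross a c.
Proof. by rewrite cnt_sym cTL cross_sym. Qed.

Lemma cLL a c : cnt fL fL a c = cnt fT fT a c.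
Proof. symmetry; apply: cnt_shift => p; by rewrite /fT /fL /sh /= ?ordSK. Qed.

Lemma cRR a c : cnt fR fR a c = cnt fT fT a c.
Proof. apply: cnt_shift => p; by rewrite /fT /fR /sh. Qed.

Lemma cBL i a : cnt fB fL i a = cnt fB fT i a.
Proof. symmetry; apply: cnt_shift => p; by rewrite /fT /fL /sh /= ?ordSK. Qed.

Lemma cBR i a : cnt fB fR i a = cnt fB fT i a.
Proof. apply: cnt_shift => p; by rewrite /fT /fR /sh. Qed.


Definition rep a : R := \sum_p (fT p == a)%:R.

Lemma cTT a c : cnt fT fT a c = (a == c)%:R * rep a.
Proof.
rewrite /cnt /rep; case: eqP => [<-|/eqP ne]; rewrite ?mul1r ?mul0r.
  by apply: eq_bigr => p _; rewrite andbb.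
apply: big1 => p _; case: eqP => //= ->; by rewrite (negbTE ne).
Qed.

Lemma sum_neq m (a : 'I_m) : \sum_(c : 'I_m) (a != c)%:R = m.-1%:R :> R.
Proof.
rewrite sum_card; have -> : [set c | a != c] = [set~ a].
  by apply/setP => c; rewrite !inE eq_sym.
by rewrite cardsC1 card_ord.
Qed.

Lemma sum_cross m (a : 'I_m) : \sum_(c : 'I_m) cross a c = m.-1%:R * l%:R.
Proof. by rewrite /cross -mulr_suml sum_neq. Qed.

Lemma rep_val a : rep a = t.-1%:R * l%:R.
Proof.
rewrite /rep -(cnt_sum2 fT fR a); under eq_bigr do rewrite cTR.
exact: sum_cross.
Qed.

Lemma sum_fst i : \sum_(p : P) (fB p == i)%:R = k%:R :> R.
Proof.
rewrite -(pair_bigA _ (fun i0 (j : 'I_k) => (i0 == i)%:R : R)) /=.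
rewrite (bigD1 i) //= [X in _ + X]big1 ?addr0.
  by under eq_bigr do rewrite eqxx; rewrite sumr_const card_ord.
by move=> i0 /negbTE ->; rewrite big1.
Qed.

Lemma cBB i i' : cnt fB fB i i' = (i == i')%:R * k%:R.
Proof.
rewrite /cnt; case: eqP => [<-|/eqP ne]; rewrite ?mul1r ?mul0r.
  by under eq_bigr do rewrite andbb; rewrite sum_fst.
apply: big1 => p _; case: eqP => //= ->; by rewrite (negbTE ne).
Qed.

Lemma N_val i a : cnt fB fT i a = (in_block d i a)%:R.
Proof.
rewrite /cnt -(pair_bigA _ (fun i0 j => ((i0 == i) && (d i0 j == a))%:R : R)) /=.
rewrite (bigD1 i) //= [X in _ + X]big1 ?addr0; last first.
  by move=> i0 /negbTE ne; apply: big1 => j _; rewrite ne.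
under eq_bigr do rewrite eqxx /=.
rewrite /in_block; case: existsP => [[j0 /eqP e]|nj].
  rewrite (bigD1 j0) //= e eqxx big1 ?addr0 // => j ne.
  case: eqP => // e2; rewrite -e in e2; have ej := hbin e2.
  by rewrite ej eqxx in ne.
by apply: big1 => j _; case: eqP => // e; case: nj; exists j; rewrite e.
Qed.

Lemma sumN i : \sum_c cnt fB fT i c = k%:R.
Proof. by rewrite cnt_sum2 sum_fst. Qed.

Lemma sumN1 a : \sum_i cnt fB fT i a = rep a.
Proof. by rewrite cnt_sum1. Qed.

Definition E4 a c : R := \sum_i cnt fB fT i a * cnt fB fT i c.

Hypothesis hbb : balanced_block d.
Hypothesis ht : (1 < t)%N.

Lemma E4_val a c :
  E4 a c = (a == c)%:R * (t.-1%:R * l%:R) + (a != c)%:R * ((k%:R - 1) * l%:R).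
Proof.
have [_ [lam hlam]] := hbb.
have E4off : forall a c, a != c -> E4 a c = lam%:R.
  move=> a0 c0 ne; rewrite /E4 -(hlam _ _ ne) -sum_card.
  by apply: eq_bigr => i _; rewrite !N_val -natrM mulnb.
have E4on : forall a, E4 a a = rep a.
  move=> a0; rewrite /E4 -sumN1; apply: eq_bigr => i _; rewrite !N_val -natrM mulnb andbb.
  by [].
have sumE4 : \sum_c E4 a c = k%:R * rep a.
  rewrite /E4 exchange_big /=; under eq_bigr do rewrite -mulr_sumr sumN.
  by rewrite -sumN1 mulr_sumr; apply: eq_bigr => i _; rewrite mulrC.
have sumE4' : \sum_c E4 a c = rep a + t.-1%:R * lam%:R.
  rewrite (bigD1 a) //= E4on; congr (_ + _).
  rewrite -(sum_neq a) mulr_suml big_mkcond /=; apply: eq_bigr => c1 _.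
  case: (eqVneq a c1) => [<-|ne]; first by rewrite mul0r.
  by rewrite E4off // mul1r.
have tn0 : t.-1%:R != 0 :> R by rewrite pnatr_eq0 -lt0n -ltnS prednK // ltnW.
have lamv : lam%:R = (k%:R - 1) * l%:R :> R.
  apply: (mulfI tn0); move: sumE4'; rewrite sumE4 rep_val => h.
  have -> : t.-1%:R * lam%:R = k%:R * (t.-1%:R * l%:R) - t.-1%:R * l%:R :> R.
    by rewrite h addrC addKr.
  by ring.
case: (eqVneq a c) => [<-|ne].
  by rewrite E4on rep_val mul1r mul0r addr0.
by rewrite E4off // lamv mul0r add0r mul1r.
Qed.

End Design.

Lemma KtK (R : realType) t : (Kmat R t)^T *m Kmat R t = (3%:R : R)%:M.
Proof.
rewrite /Kmat !tr_col_mx !mul_row_col !trmx1 !mul1mx.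
by apply/matrixP => i j; rewrite !mxE; case: (i == j) => /=; rewrite ?addr0 //; ring.
Qed.

Lemma G0val (R : realType) t : mpinv ((Kmat R t)^T *m Kmat R t) = (3%:R^-1 : R)%:M.
Proof.
have [h _ _ _] := mpinvP ((Kmat R t)^T *m Kmat R t).
move: h; rewrite KtK mul_scalar_mx mul_mx_scalar => h.
have mxD : forall m n (A C : 'M[R]_(m, n)) i j, (A + C) i j = A i j + C i j.
  by move=> *; rewrite mxE.
have n3 : (3%:R : R) != 0 by rewrite pnatr_eq0.
apply: (@scalerI _ _ (3%:R * 3%:R : R)); first by rewrite mulf_neq0.
rewrite -scalerA h scale_scalar_mx; congr (_%:M).
by rewrite -mulrA mulfV // mulr1.
Qed.

Theorem lemma5 (R : realType) (t b k l : nat) (d : design t b k) :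
  (0 < b)%N -> (4 <= k)%N -> (k <= t)%N ->
  (l * (t * (t - 1)))%N = (b * k)%N ->
  CNBD2 d l ->
  info_psi R d =
    ((b * (k - 3))%:R / (3 * (t - 1))%:R) *: (1%:M - t%:R^-1 *: const_mx 1).
Proof.
move=> hb hk4 hkt hl [[hbin hbb hnb1] hnb2].
have hk : (2 < k)%N by apply: leq_trans hk4.
have ht : (1 < t)%N by apply: leq_trans hkt; apply: leq_trans hk4.
set T := ind R (fT d); set L := ind R (fL d); set Rm := ind R (fR d).
set B := ind R (@fB b k).
have eT : Tmat R d = T by apply/matrixP => r c; rewrite !mxE.
have eL : Lmat R d = L by apply/matrixP => r c; rewrite !mxE.
have eR : Rmat R d = Rm by apply/matrixP => r c; rewrite !mxE.
have eB : Bmat R b k = B by apply/matrixP => r c; rewrite !mxE.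
set S := T + L + Rm.
have eAK : Amat R d *m Kmat R t = S.
  by rewrite /Amat /Kmat !mul_row_col !mulmx1 eT eL eR.
have eX1 : X1mat R d = 3%:R^-1 *: S.
  by rewrite /X1mat G0val eAK mul_mx_scalar.
set W := k%:R^-1 *: (B^T *m T).
set Y := B *m W.
set Z := 3%:R^-1 *: S - Y.
have mxD : forall m n (A C : 'M[R]_(m, n)) i j, (A + C) i j = A i j + C i j.
  by move=> *; rewrite mxE.
have n3 : (3%:R : R) != 0 by rewrite pnatr_eq0.
have nk : (k%:R : R) != 0 by rewrite pnatr_eq0 -lt0n; apply: leq_trans hk.
have F1L : L^T *m S = T^T *m S.
  apply/matrixP => a c; rewrite /S !mulmxDr !mxD /T /L /Rm !indTind cLL.
  rewrite (cLT R hk hbin hnb1) (cLR R hk hbin hnb2) (cTL R hk hbin hnb1).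
  rewrite (cTR R hk hbin hnb1); ring.
have F1R : Rm^T *m S = T^T *m S.
  apply/matrixP => a c; rewrite /S !mulmxDr !mxD /T /L /Rm !indTind cRR.
  rewrite (cRT R hk hbin hnb1) (cRL R hk hbin hnb2) (cTL R hk hbin hnb1).
  rewrite (cTR R hk hbin hnb1); ring.
have F2L : B^T *m L = B^T *m T.
  by apply/matrixP => i a; rewrite /B /T /L /Rm !indTind cBL.
have F2R : B^T *m Rm = B^T *m T.
  by apply/matrixP => i a; rewrite /B /T /L /Rm !indTind cBR.
have F3 : B^T *m B = (k%:R : R)%:M.
  by apply/matrixP => i j; rewrite /B indTind cBB mxE mulr_natl.
have BZ : B^T *m Z = 0.
  rewrite /Z mulmxBr -scalemxAr /S !mulmxDr F2L F2R /Y mulmxA F3 mul_scalar_mx.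
  rewrite /W scalerA mulfV // scale1r.
  by apply/matrixP => i j; rewrite !mxE; field.
have LB : L^T *m B = T^T *m B.
  by rewrite -[L^T *m B]trmxK trmx_mul trmxK F2L trmx_mul trmxK.
have RB : Rm^T *m B = T^T *m B.
  by rewrite -[Rm^T *m B]trmxK trmx_mul trmxK F2R trmx_mul trmxK.
set U := T^T *m Z.
have LZ : L^T *m Z = U.
  by rewrite /U /Z !mulmxBr -!scalemxAr F1L /Y !mulmxA LB.
have RZ : Rm^T *m Z = U.
  by rewrite /U /Z !mulmxBr -!scalemxAr F1R /Y !mulmxA RB.
have AZ : (Amat R d)^T *m Z = Kmat R t *m U.
  by rewrite /Amat /Kmat !tr_row_mx !mul_col_mx !mul1mx eT eL eR LZ RZ.
have MK : (Mmat R t)^T *m Kmat R t = 0.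
  rewrite /Mmat G0val linearB /= trmx1 mul_mx_scalar trmx_mul trmxK.
  rewrite linearZ /= -scalemxAr mulmxBl mul1mx -scalemxAl -mulmxA KtK.
  by rewrite mul_mx_scalar scalerA mulVf // scale1r subrr.
have X2Z : (X2mat R d)^T *m Z = 0.
  rewrite /X2mat tr_row_mx mul_col_mx trmx_mul -mulmxA AZ mulmxA MK mul0mx.
  by rewrite eB BZ col_mx0.
have eY : X2mat R d *m col_mx 0 W = Y.
  by rewrite /X2mat mul_row_col mulmx0 add0r eB.
have PX : prperp (X2mat R d) *m X1mat R d = Z.
  have e1 : X1mat R d = X2mat R d *m col_mx 0 W + Z by rewrite eY /Z eX1 addrC subrK.
  rewrite /prperp mulmxBl mul1mx e1 mulmxDr mulmxA pr_id (pr_orth X2Z) addr0.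
  by rewrite addrC addKr.
have eInfo : info_psi R d = U.
  have SZ0 : forall Z0 : 'M[R]_(nplots b k, t),
      (T + L + Rm)^T *m Z0 = T^T *m Z0 + L^T *m Z0 + Rm^T *m Z0.
    by move=> Z0; rewrite !raddfD !mulmxDl.
  have SZ := SZ0 Z.
  rewrite /info_psi -mulmxA PX eX1 linearZ /= -scalemxAl SZ LZ RZ.
  by apply/matrixP => i j; rewrite !mxE; field.
rewrite eInfo; apply/matrixP => a c.
rewrite /U /Z mulmxBr -scalemxAr /Y mulmxA /W -scalemxAr.
have mxB : forall m n (A C : 'M[R]_(m, n)) i j, (A - C) i j = A i j - C i j.
  by move=> *; rewrite !mxE.
have mxZ : forall m n (x : R) (A : 'M[R]_(m, n)) i j, (x *: A) i j = x * A i j.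
  by move=> *; rewrite !mxE.
have e1 : (T^T *m S) a c = cnt R (fT d) (fT d) a c + cnt R (fT d) (fL d) a c
                          + cnt R (fT d) (fR d) a c.
  by rewrite /S !mulmxDr !mxD /T /L /Rm !indTind.
have e2 : (T^T *m B *m (B^T *m T)) a c = E4 R d a c.
  rewrite mxE /E4; apply: eq_bigr => i _; rewrite /T /B !indTind.
  by rewrite [cnt R (fT d) _ _ _]cnt_sym.
rewrite mxB !mxZ e1 e2.
rewrite cTT (cTL R hk hbin hnb1) (cTR R hk hbin hnb1) (E4_val R hk hbin hnb1 hbb ht).
rewrite (rep_val R hk hbin hnb1) /cross !mxE.
have hl' : (b%:R : R) = l%:R * t%:R * (t%:R - 1) / k%:R.
  apply: (mulIf nk); rewrite mulfVK // -(natrM _ b k) -hl !natrM natrB //; last by apply: ltnW.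
  by rewrite mulrA.
have ek : ((k - 3)%N%:R : R) = k%:R - 3%:R by rewrite natrB //; apply: ltnW.
have et : ((t - 1)%N%:R : R) = t%:R - 1 by rewrite natrB //; apply: ltnW.
have et' : (t.-1%:R : R) = t%:R - 1 by rewrite -subn1 et.
have tn0 : (t%:R : R) != 0 by rewrite pnatr_eq0 -lt0n; apply: ltnW.
have t1n0 : (t%:R - 1 : R) != 0.
  by rewrite -et pnatr_eq0 subn_eq0 -ltnNge.
rewrite natrM ek natrM et et' hl'.
case: (a == c) => /=; rewrite ?mul0r ?mul1r ?add0r ?sub0r ?addr0 ?mulr1.
  by field; rewrite tn0 t1n0 nk.
by field; rewrite tn0 t1n0 nk.
Qed.
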